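(* Let $X$ be a set and $B=(B,+,0)$ a unitary magma. For every retraction point $\mathcal A=(A,k,q,s,p)$ from $X$ to $B$, define $\Phi(\mathcal A)\colon X\times B\times X\times B\to X$ by $$\Phi(\mathcal A)(x,b,x',b')=q\big((k(x)+s(b))+(k(x')+s(b'))\big).$$ Then $\Phi(\mathcal A)\in\mathbf{Act}(X,B)$, and for any two retraction points $\mathcal A,\mathcal A'$ from $X$ to $B$ one has $\mathcal A\sim\mathcal A'$ if and only if $\Phi(\mathcal A)=\Phi(\mathcal A')$. Consequently $\Phi$ induces a bijection $$\mathbf{Ptr}(X,B)/\!\sim\;\cong\;\mathbf{Act}(X,B).$$
   Context: A unitary magma is a set with a binary operation $+$ and an element $0$ with $b+0=b=0+b$ for all $b$; morphisms preserve $+$ and $0$. Given a set $X$ and a unitary magma $B=(B,+,0)$, a retraction point from $X$ to $B$ is a tuple $(A,k,q,s,p)$ where $A=(A,+,0)$ is a unitary magma, $k\colon X\to A$ and $q\colon A\to X$ are maps, $s\colon B\to A$ and $p\colon A\to B$ are morphisms of unitary magmas, and $p(s(b))=b$, $q(k(x))=x$, $p(k(x))=0$, $q(s(b))=q(0)$, and $k(q(a))+s(p(a))=a$ for all $x\in X$, $b\in B$, $a\in A$. $\mathbf{Ptr}(X,B)$ denotes the collection of all retraction points from $X$ to $B$. Two retraction points $(A,k,q,s,p)$ and $(A',k',q',s',p')$ from $X$ to $B$ are equivalent, written $\sim$, if there is a morphism of unitary magmas $\alpha\colon A\to A'$ with $\alpha k=k'$, $\alpha s=s'$ and $q'\alpha=q$.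 A $B$-action is a pair $(X,\varphi)$ with $X$ a set and $\varphi\colon X\times B\times X\times B\to X$ a map such that: (1) there is an element $0\in X$ with $\varphi(x,0,0,0)=x=\varphi(0,0,x,0)$ for all $x\in X$; (2) $\varphi(x,b,0,0)=\varphi(x,0,0,b)=\varphi(0,0,x,b)$ for all $x\in X,b\in B$; (3) $\varphi(0,b,0,b')=0$ for all $b,b'\in B$; (4) writing $\varphi_{00}(x,b)=\varphi(x,0,0,b)$, for all $x,x'\in X$, $b,b'\in B$: $\varphi(x,b,x',b')=\varphi_{00}\big(\varphi(\varphi_{00}(x,b),b,\varphi_{00}(x',b'),b'),\,b+b'\big)$. $\mathbf{Act}(X,B)$ denotes the set of all maps $\varphi$ such that $(X,\varphi)$ is a $B$-action. *)

(* Defs.v *)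
Set Implicit Arguments.

Record UMagma := {
  um_car :> Type;
  um_add : um_car -> um_car -> um_car;
  um_zero : um_car;
  um_add0r : forall b, um_add b um_zero = b;
  um_add0l : forall b, um_add um_zero b = b
}.
Arguments um_add {_} _ _.
Arguments um_zero {_}.

Definition um_morph (M N : UMagma) (f : M -> N) : Prop :=
  (forall a b, f (um_add a b) = um_add (f a) (f b)) /\ f um_zero = um_zero.

Record RetrPoint (X : Type) (B : UMagma) := {
  rp_A : UMagma;
  rp_k : X -> rp_A;
  rp_q : rp_A -> X;
  rp_s : B -> rp_A;
  rp_p : rp_A -> B;
  rp_s_morph : um_morph B rp_A rp_s;
  rp_p_morph : um_morph rp_A B rp_p;
  rp_ps : forall b, rp_p (rp_s b) = b;
  rp_qk : forall x, rp_q (rp_k x) = x;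
  rp_pk : forall x, rp_p (rp_k x) = um_zero;
  rp_qs : forall b, rp_q (rp_s b) = rp_q um_zero;
  rp_split : forall a, um_add (rp_k (rp_q a)) (rp_s (rp_p a)) = a
}.

Definition rp_equiv (X : Type) (B : UMagma) (R R' : RetrPoint X B) : Prop :=
  exists alpha : rp_A R -> rp_A R',
    um_morph (rp_A R) (rp_A R') alpha /\
    (forall x, alpha (rp_k R x) = rp_k R' x) /\
    (forall b, alpha (rp_s R b) = rp_s R' b) /\
    (forall a, rp_q R' (alpha a) = rp_q R a).

(** B-actions; phi : X x B x X x B -> X is written curried.
    The element 0 of X from axiom (1) is the one referred to in (2)-(4). *)
Definition is_action (X : Type) (B : UMagma) (phi : X -> B -> X -> B -> X) : Prop :=
  exists z : X,
    (forall x, phi x um_zero z um_zero = x /\ phi z um_zero x um_zero = x) /\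
    (forall x b, phi x b z um_zero = phi x um_zero z b /\
                 phi x um_zero z b = phi z um_zero x b) /\
    (forall b b', phi z b z b' = z) /\
    (forall x x' b b',
       phi x b x' b' =
       phi (phi (phi x um_zero z b) b (phi x' um_zero z b') b') um_zero z (um_add b b')).

Definition Act (X : Type) (B : UMagma) : (X -> B -> X -> B -> X) -> Prop :=
  is_action B.

Definition Phi (X : Type) (B : UMagma) (R : RetrPoint X B) : X -> B -> X -> B -> X :=
  fun x b x' b' =>
    rp_q R (um_add (um_add (rp_k R x) (rp_s R b)) (um_add (rp_k R x') (rp_s R b'))).

(* Main.v *)
Require Import Defs.
From Stdlib Require Import ProofIrrelevance FunctionalExtensionality Setoid.
Set Implicit Arguments.

Definition aspec (X : Type) (B : UMagma) (phi : X -> B -> X -> B -> X) (z : X) : Prop :=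
    (forall x, phi x um_zero z um_zero = x /\ phi z um_zero x um_zero = x) /\
    (forall x b, phi x b z um_zero = phi x um_zero z b /\
                 phi x um_zero z b = phi z um_zero x b) /\
    (forall b b', phi z b z b' = z) /\
    (forall x x' b b',
       phi x b x' b' =
       phi (phi (phi x um_zero z b) b (phi x' um_zero z b') b') um_zero z (um_add b b')).

Definition fixp (X : Type) (B : UMagma) (phi : X -> B -> X -> B -> X) (z : X) (a : X * B) : Prop :=
  phi (fst a) um_zero z (snd a) = fst a.

Arguments aspec {X B} phi z.
Arguments fixp {X B} phi z a.

Lemma fix_add (X : Type) (B : UMagma) (phi : X -> B -> X -> B -> X) (z : X) (H : @aspec X B phi z) x b x' b' :
  fixp phi z (x, b) -> fixp phi z (x', b') -> fixp phi z (phi x b x' b', um_add b b').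
Proof.
  destruct H as (H1 & H2 & H3 & H4). unfold fixp; simpl. intros Hx Hx'.
  rewrite (H4 x x' b b') at 2. rewrite Hx, Hx'. reflexivity.
Qed.

Definition Car (X : Type) (B : UMagma) (phi : X -> B -> X -> B -> X) (z : X) := {a : X * B | @fixp X B phi z a}.
Arguments Car {X B} phi z.

Lemma car_eq (X : Type) (B : UMagma) (phi : X -> B -> X -> B -> X) (z : X) (u v : @Car X B phi z) : proj1_sig u = proj1_sig v -> u = v.
Proof.
  destruct u as [u Hu], v as [v Hv]; simpl; intros ->.
  f_equal; apply proof_irrelevance.
Qed.

Definition cadd (X : Type) (B : UMagma) (phi : X -> B -> X -> B -> X) (z : X) (H : @aspec X B phi z) (u v : Car phi z) : Car phi z.
Proof.
  destruct u as [[x b] Hu], v as [[x' b'] Hv].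
  exact (exist _ (phi x b x' b', um_add b b') (fix_add H Hu Hv)).
Defined.

Lemma fix_zero (X : Type) (B : UMagma) (phi : X -> B -> X -> B -> X) (z : X) (H : @aspec X B phi z) : fixp phi z (z, um_zero).
Proof. destruct H as (H1 & _). unfold fixp; simpl. apply H1. Qed.

Definition czero (X : Type) (B : UMagma) (phi : X -> B -> X -> B -> X) (z : X) (H : @aspec X B phi z) : Car phi z :=
  exist _ (z, um_zero) (fix_zero H).

Lemma cadd0r (X : Type) (B : UMagma) (phi : X -> B -> X -> B -> X) (z : X) (H : @aspec X B phi z) u : cadd H u (czero H) = u.
Proof.
  apply car_eq. destruct u as [[x b] Hu]; simpl.
  destruct H as (H1 & H2 & H3 & H4). unfold fixp in Hu; simpl in Hu.
  rewrite um_add0r. f_equal. rewrite (proj1 (H2 x b)). exact Hu.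
Qed.

Lemma cadd0l (X : Type) (B : UMagma) (phi : X -> B -> X -> B -> X) (z : X) (H : @aspec X B phi z) u : cadd H (czero H) u = u.
Proof.
  apply car_eq. destruct u as [[x b] Hu]; simpl.
  destruct H as (H1 & H2 & H3 & H4). unfold fixp in Hu; simpl in Hu.
  rewrite um_add0l. f_equal. rewrite <- (proj2 (H2 x b)). exact Hu.
Qed.

Definition CM (X : Type) (B : UMagma) (phi : X -> B -> X -> B -> X) (z : X) (H : @aspec X B phi z) : UMagma :=
  {| um_car := Car phi z; um_add := cadd H; um_zero := czero H;
     um_add0r := cadd0r H; um_add0l := cadd0l H |}.

Lemma fix_k (X : Type) (B : UMagma) (phi : X -> B -> X -> B -> X) (z : X) (H : @aspec X B phi z) x : fixp phi z (x, um_zero).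
Proof. destruct H as (H1 & _). unfold fixp; simpl. apply H1. Qed.

Lemma fix_s (X : Type) (B : UMagma) (phi : X -> B -> X -> B -> X) (z : X) (H : @aspec X B phi z) b : fixp phi z (z, b).
Proof. destruct H as (_ & _ & H3 & _). unfold fixp; simpl. apply H3. Qed.

Definition ck (X : Type) (B : UMagma) (phi : X -> B -> X -> B -> X) (z : X) (H : @aspec X B phi z) (x : X) : CM H :=
  exist _ (x, um_zero) (fix_k H x).
Definition cs (X : Type) (B : UMagma) (phi : X -> B -> X -> B -> X) (z : X) (H : @aspec X B phi z) (b : B) : CM H :=
  exist _ (z, b) (fix_s H b).
Definition cq (X : Type) (B : UMagma) (phi : X -> B -> X -> B -> X) (z : X) (H : @aspec X B phi z) (a : CM H) : X := fst (proj1_sig a).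
Definition cp (X : Type) (B : UMagma) (phi : X -> B -> X -> B -> X) (z : X) (H : @aspec X B phi z) (a : CM H) : B := snd (proj1_sig a).

Arguments cq {X B phi z} H a.
Arguments cp {X B phi z} H a.

Lemma cs_morph (X : Type) (B : UMagma) (phi : X -> B -> X -> B -> X) (z : X) (H : @aspec X B phi z) : um_morph B (CM H) (cs H).
Proof.
  split.
  - intros a b. apply car_eq; simpl. destruct H as (_ & _ & H3 & _). rewrite H3. reflexivity.
  - apply car_eq; reflexivity.
Qed.

Lemma cp_morph (X : Type) (B : UMagma) (phi : X -> B -> X -> B -> X) (z : X) (H : @aspec X B phi z) : um_morph (CM H) B (cp H).
Proof.
  split.
  - intros [[x b] Hu] [[x' b'] Hv]. reflexivity.
  - reflexivity.
Qed.

Lemma csplit (X : Type) (B : UMagma) (phi : X -> B -> X -> B -> X) (z : X) (H : @aspec X B phi z) a :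
  um_add (ck H (cq H a)) (cs H (cp H a)) = a.
Proof.
  apply car_eq. destruct a as [[x b] Hu]; simpl. unfold cq, cp; simpl.
  unfold fixp in Hu; simpl in Hu. rewrite um_add0l, Hu. reflexivity.
Qed.

Definition CR (X : Type) (B : UMagma) (phi : X -> B -> X -> B -> X) (z : X) (H : @aspec X B phi z) : RetrPoint X B :=
  {| rp_A := CM H; rp_k := ck H; rp_q := cq H; rp_s := cs H; rp_p := cp H;
     rp_s_morph := cs_morph H; rp_p_morph := cp_morph H;
     rp_ps := fun b => eq_refl; rp_qk := fun x => eq_refl; rp_pk := fun x => eq_refl;
     rp_qs := fun b => eq_refl; rp_split := fun a => csplit a |}.

Lemma CR_Phi (X : Type) (B : UMagma) (phi : X -> B -> X -> B -> X) (z : X) (H : @aspec X B phi z) : Phi (CR H) = phi.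
Proof.
  apply functional_extensionality; intro x.
  apply functional_extensionality; intro b.
  apply functional_extensionality; intro x'.
  apply functional_extensionality; intro b'.
  unfold Phi; simpl. unfold cq; simpl.
  rewrite !um_add0l.
  pose proof (fix_add H (fix_k H x) (fix_s H b)) as Fx.
  pose proof (fix_add H (fix_k H x') (fix_s H b')) as Fx'.
  unfold fixp in Fx, Fx'; simpl in Fx, Fx'. rewrite um_add0l in Fx, Fx'.
  pose proof (fix_add H Fx Fx') as F. unfold fixp in F; simpl in F.
  destruct H as (H1 & H2 & H3 & H4).
  rewrite (H4 x x' b b'). symmetry. exact F.
Qed.

Section RP.
Lemma kq0 X B (R : RetrPoint X B) : rp_k R (rp_q R um_zero) = um_zero.
Proof.
  pose proof (rp_split R um_zero) as E.
  rewrite (proj2 (rp_p_morph R)), (proj2 (rp_s_morph R)), um_add0r in E. exact E.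
Qed.

Lemma p_ks X B (R : RetrPoint X B) x b : rp_p R (um_add (rp_k R x) (rp_s R b)) = b.
Proof. rewrite (proj1 (rp_p_morph R)), rp_pk, rp_ps, um_add0l. reflexivity. Qed.

Lemma Phi_z X B (R : RetrPoint X B) x b :
  Phi R x b (rp_q R um_zero) um_zero = rp_q R (um_add (rp_k R x) (rp_s R b)).
Proof. unfold Phi. rewrite kq0, (proj2 (rp_s_morph R)), !um_add0r. reflexivity. Qed.
End RP.

Lemma Phi_act X B (R : RetrPoint X B) : Act B (Phi R).
Proof.
  exists (rp_q R um_zero).
  pose proof (kq0 R) as K. pose proof (proj2 (rp_s_morph R)) as S0.
  unfold Phi. rewrite K, S0. split; [|split; [|split]].
  - intro x. split.
    + rewrite !um_add0r, rp_qk. reflexivity.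
    + rewrite !um_add0r, um_add0l, rp_qk. reflexivity.
  - intros x b. split.
    + rewrite !um_add0r, um_add0l. reflexivity.
    + rewrite !um_add0l, !um_add0r. reflexivity.
  - intros b b'. rewrite !um_add0l, <- (proj1 (rp_s_morph R)), rp_qs. reflexivity.
  - intros x x' b b'. rewrite !um_add0l, !um_add0r.
    set (a := um_add (rp_k R x) (rp_s R b)).
    set (a' := um_add (rp_k R x') (rp_s R b')).
    assert (Ea : um_add (rp_k R (rp_q R a)) (rp_s R b) = a).
    { pose proof (rp_split R a) as E0. assert (Pa : rp_p R a = b) by (unfold a; apply p_ks). rewrite Pa in E0. exact E0. }
    assert (Ea' : um_add (rp_k R (rp_q R a')) (rp_s R b') = a').
    { pose proof (rp_split R a') as E0. assert (Pa : rp_p R a' = b') by (unfold a'; apply p_ks). rewrite Pa in E0. exact E0. }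
    rewrite Ea, Ea'.
    assert (P : rp_p R (um_add a a') = um_add b b').
    { rewrite (proj1 (rp_p_morph R)). unfold a, a'. rewrite !p_ks. reflexivity. }
    rewrite <- P, rp_split. reflexivity.
Qed.

Lemma equiv_Phi X B (R R' : RetrPoint X B) : rp_equiv R R' <-> Phi R = Phi R'.
Proof.
  split.
  - intros (al & Hm & Hk & Hs & Hq).
    apply functional_extensionality; intro x.
    apply functional_extensionality; intro b.
    apply functional_extensionality; intro x'.
    apply functional_extensionality; intro b'.
    unfold Phi. rewrite <- Hq, !(proj1 Hm), Hk, Hs, Hk, Hs. reflexivity.
  - intro E.
    assert (Z : rp_q R um_zero = rp_q R' um_zero).
    { pose proof (f_equal (fun f => f (rp_q R um_zero) um_zero (rp_q R' um_zero) um_zero) E) as E1.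
      simpl in E1. unfold Phi in E1.
      rewrite !kq0, (proj2 (rp_s_morph R)), (proj2 (rp_s_morph R')), !um_add0r, !um_add0l, !rp_qk in E1.
      symmetry; exact E1. }
    assert (Q : forall x b, rp_q R' (um_add (rp_k R' x) (rp_s R' b)) = rp_q R (um_add (rp_k R x) (rp_s R b))).
    { intros x b. rewrite <- !Phi_z, Z, E. reflexivity. }
    exists (fun a => um_add (rp_k R' (rp_q R a)) (rp_s R' (rp_p R a))).
    split; [split|split; [|split]].
    + intros a1 a2.
      set (c := um_add (um_add (rp_k R' (rp_q R a1)) (rp_s R' (rp_p R a1)))
                       (um_add (rp_k R' (rp_q R a2)) (rp_s R' (rp_p R a2)))).
      rewrite <- (rp_split R' c). f_equal.
      * f_equal. unfold c.
        change (rp_q R' _) with (Phi R' (rp_q R a1) (rp_p R a1) (rp_q R a2) (rp_p R a2)).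
        rewrite <- E. unfold Phi. rewrite !rp_split. reflexivity.
      * f_equal. unfold c. rewrite (proj1 (rp_p_morph R')), !p_ks, (proj1 (rp_p_morph R)). reflexivity.
    + rewrite (proj2 (rp_p_morph R)), (proj2 (rp_s_morph R')), um_add0r, Z. apply kq0.
    + intro x. rewrite rp_qk, rp_pk, (proj2 (rp_s_morph R')), um_add0r. reflexivity.
    + intro b. rewrite rp_qs, rp_ps, Z, kq0, um_add0l. reflexivity.
    + intro a. rewrite Q, rp_split. reflexivity.
Qed.

Theorem proposition5p3 (X : Type) (B : UMagma) :
  (forall R : RetrPoint X B, Act B (Phi R)) /\
  (forall R R' : RetrPoint X B, rp_equiv R R' <-> Phi R = Phi R') /\
  (forall phi, Act B phi -> exists R : RetrPoint X B, Phi R = phi).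
Proof.
  split; [exact (@Phi_act X B)|split; [exact (@equiv_Phi X B)|]].
  intros phi [z H]. exists (CR (phi:=phi) (z:=z) H). apply CR_Phi.
Qed.
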